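(* Let $Q\in\mathcal{Q}(n,d,m)$ and let $A=(a_1,\dots,a_t)$, $t\geq1$, be a chain of paths in $Q$ such that $\underline{\delta}=2\sum_{i=1}^t\mathrm{mdeg}(a_i)\in\Omega_0(Q)$. Then $|\underline{\delta}|-mt-n_0\leq n$, where $n_0=0$ if $t=1$, $n_0=\#(V(a_1)\cap V(a_2))$ if $t=2$, and $n_0=\#(V(a_2)\cup\cdots\cup V(a_{t-1}))$ if $t\geq3$.
   Context: A quiver $Q$ is a finite oriented graph; for an arrow $a$, $a''$ is its tail and $a'$ its head. A path $a=a_1\cdots a_s$ ($a_i$ arrows) satisfies $a_i'=a_{i+1}''$; it is closed if $a_1''=a_s'$; $V(a)=\{a_1'',a_1',\dots,a_s'\}$, $A(a)=\{a_1,\dots,a_s\}$. A closed path is primitive if each vertex of $V(a)$ is the head of exactly one $a_i$. $m(Q)$ is the maximal degree of a primitive closed path; $Q$ is strongly connected if some closed path contains all vertices; $\mathcal{Q}(n,d,m)$ is the set of strongly connected quivers with $n$ vertices, $d$ arrows and $m(Q)=m$. The multidegree $\mathrm{mdeg}(a)\in\mathbb{N}^{\#A(Q)}$ of a path $a$ has $b$-component equal to the number of $i$ with $a_i=b$; $|\underline{\delta}|=\sum_b\delta_b$. $\Omega_0(Q)$ is the set of $\mathrm{mdeg}(h)$ for closed paths $h$ in $Q$ with $A(h)=A(Q)$. A chain of paths $(a_1,\dots,a_t)$ is an ordered sequence of primitive closed paths such that $V(a_i)\cap V(a_j)=\emptyset$ if $|i-j|>1$ and $V(a_i)\cap V(a_j)\neq\emptyset$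 if $|i-j|\leq1$. *)

(* Defs.v *)
From mathcomp Require Import all_boot.
Set Implicit Arguments. Unset Strict Implicit. Unset Printing Implicit Defensive.

(* A quiver: finite vertex type V, finite arrow type Ar, with
   tl a = a'' (tail) and hd a = a' (head). Multiple arrows/loops allowed. *)
Section Quiver.
Variables (V Ar : finType) (tl hd : Ar -> V).

Definition is_path (p : seq Ar) : bool :=
  if p is x :: s then path (fun a b => hd a == tl b) x s else false.

Definition is_closed (p : seq Ar) : bool :=
  if p is x :: s then path (fun a b => hd a == tl b) x s && (tl x == hd (last x s))
  else false.

Definition pverts (p : seq Ar) : {set V} :=
  if p is x :: s then [set v | v \in tl x :: map hd p] else set0.

Definition parrows (p : seq Ar) : {set Ar} := [set b | b \in p].

Definition is_primitive (p : seq Ar) : bool :=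
  is_closed p && [forall v in pverts p, count (fun b => hd b == v) p == 1].

Definition is_mQ (m : nat) : Prop :=
  (exists2 p, is_primitive p & size p = m) /\
  (forall p, is_primitive p -> size p <= m).

Definition strongly_connected : Prop :=
  exists2 p, is_closed p & pverts p = [set: V].

Definition in_Qndm (n d m : nat) : Prop :=
  [/\ #|V| = n, #|Ar| = d, strongly_connected & is_mQ m].

Definition mdeg (p : seq Ar) : {ffun Ar -> nat} := [ffun b => count_mem b p].

Definition absdeg (delta : {ffun Ar -> nat}) : nat := \sum_(b : Ar) delta b.

Definition in_Omega0 (delta : {ffun Ar -> nat}) : Prop :=
  exists h, [/\ is_closed h, parrows h = [set: Ar] & mdeg h = delta].

(* chain of paths (a_1,...,a_t), stored 0-indexed as a seq *)
Definition is_chain (A : seq (seq Ar)) : Prop :=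
  (forall i, i < size A -> is_primitive (nth [::] A i)) /\
  (forall i j, i < size A -> j < size A ->
     (j + 1 < i \/ i + 1 < j) -> [disjoint pverts (nth [::] A i) & pverts (nth [::] A j)]) /\
  (forall i j, i < size A -> j < size A ->
     (i <= j + 1 /\ j <= i + 1) -> ~~ [disjoint pverts (nth [::] A i) & pverts (nth [::] A j)]).

Definition chain_delta (A : seq (seq Ar)) : {ffun Ar -> nat} :=
  [ffun b => 2 * \sum_(a <- A) mdeg a b].

Definition chain_n0 (A : seq (seq Ar)) : nat :=
  match size A with
  | 0 | 1 => 0
  | 2 => #|pverts (nth [::] A 0) :&: pverts (nth [::] A 1)|
  | t => #|\bigcup_(1 <= i < t.-1) pverts (nth [::] A i)|
  end.

End Quiver.

(* Main.v *)
Require Import Defs.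
From mathcomp Require Import all_boot.
From mathcomp Require Import zify.

Lemma sum_eq_mem (T : finType) (P : {set T}) u :
  \sum_(v in P) ((u == v) : nat) = (u \in P).
Proof.
case: (boolP (u \in P)) => Hu.
  rewrite (bigD1 u) //= eqxx big1 // => v /andP [_ Hv].
  by rewrite eq_sym (negbTE Hv).
rewrite big1 // => v Hv; case: eqP => // E; by rewrite E Hv in Hu.
Qed.

Lemma card_sum (T : finType) (P : {set T}) : #|P| = \sum_v ((v \in P) : nat).
Proof. by rewrite -sum1_card big_mkcond. Qed.

Lemma sum_count_size (Ar : finType) (s : seq Ar) : \sum_(b : Ar) count_mem b s = size s.
Proof.
elim: s => [|x s IH] /=; first by rewrite big1.
rewrite big_split /= IH (bigD1 x) //= eqxx big1 // => b Hb.
by rewrite eq_sym (negbTE Hb).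
Qed.

Section Q.
Variables (V Ar : finType) (tl hd : Ar -> V).

Lemma sum_count_heads (P : {set V}) (p : seq Ar) :
  \sum_(v in P) count (fun b => hd b == v) p = count (fun b => hd b \in P) p.
Proof.
elim: p => [|x s IH] /=; first by rewrite big1.
by rewrite big_split /= IH sum_eq_mem.
Qed.

Lemma prim_size p : is_primitive tl hd p -> size p = #|pverts tl hd p|.
Proof.
move/andP=> [_ /forallP H].
have -> : #|pverts tl hd p| = \sum_(v in pverts tl hd p) count (fun b => hd b == v) p.
  rewrite -sum1_card; apply: eq_bigr => v Hv.
  by move: (H v); rewrite Hv /= => /eqP ->.
rewrite sum_count_heads -(count_predT p); apply: eq_in_count => b Hb /=.
case: p Hb {H} => [|x s] //= Hb.
by rewrite inE in_cons (map_f hd Hb) orbT.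
Qed.

Lemma bigcup_seq_sub (W : nat -> {set V}) (r : seq nat) k :
  k \in r -> W k \subset \bigcup_(i <- r) W i.
Proof.
elim: r => [|x r IH] //; rewrite in_cons big_cons => /orP [/eqP -> | Hk].
  exact: subsetUl.
by apply: subset_trans (IH Hk) _; exact: subsetUr.
Qed.

Lemma chain_count (A : seq (seq Ar)) : is_chain tl hd A ->
  \sum_(i < size A) #|pverts tl hd (nth [::] A i)| <= #|V| + chain_n0 tl hd A.
Proof.
move=> [_ [Hdis _]].
pose W i := pverts tl hd (nth [::] A i).
pose Mf n := if n == 2 then W 0 :&: W 1 else \bigcup_(1 <= k < n.-1) W k.
have HM : chain_n0 tl hd A = #|Mf (size A)|.
  rewrite /chain_n0 /Mf; case: (size A) => [|[|[|t']]] //=.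
  by rewrite big_geq ?cards0.
  by rewrite big_geq ?cards0.
set t := size A in Hdis HM *.
set M := Mf t in HM *.
have adj : forall v (i j : 'I_t), v \in W i -> v \in W j -> i <= j + 1 /\ j <= i + 1.
  move=> v i j Hi Hj.
  case: (boolP ((j + 1 < i) || (i + 1 < j))) => [/orP Hc|]; last by lia.
  have := Hdis i j (ltn_ord i) (ltn_ord j) ltac:(by case: Hc; [left|right]).
  by move/disjointFr => /(_ _ Hi); rewrite Hj.
have Hv : forall v, #|[set i : 'I_t | v \in W i]| <= 1 + (v \in M).
  move=> v; set I := [set i : 'I_t | v \in W i].
  case: (leqP #|I| 1) => [h|]; first by apply: leq_trans h (leq_addr _ _).
  move/card_gt1P => [i [j [Hi Hj Hij]]].
  rewrite !inE in Hi Hj.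
  have [a1 a2] := adj v i j Hi Hj.
  have Hij' : (i : nat) <> j by move=> E; move/eqP: Hij; apply; apply: val_inj.
  have HvM : v \in M.
    rewrite /M /Mf; case: eqP => Ht.
      have [[E1 E2]|[E1 E2]] : (i = 0 :> nat /\ j = 1 :> nat) \/ (i = 1 :> nat /\ j = 0 :> nat).
        have := ltn_ord i; have := ltn_ord j; move: (i : nat) (j : nat) a1 a2 Hij' => x y; rewrite -/t Ht; lia.
      by rewrite inE -E2 -E1 Hi Hj.
      by rewrite inE -E1 -E2 Hi Hj.
    have [[k1 k2]|[k1 k2]] : (1 <= i /\ i < t.-1) \/ (1 <= j /\ j < t.-1).
      have := ltn_ord i; have := ltn_ord j; move: (i : nat) (j : nat) a1 a2 Hij' Ht => x y; lia.
    have Hm : (i : nat) \in index_iota 1 t.-1 by rewrite mem_index_iota; lia.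
    exact: (subsetP (bigcup_seq_sub W _ _ Hm) v Hi).
    have Hm : (j : nat) \in index_iota 1 t.-1 by rewrite mem_index_iota; lia.
    exact: (subsetP (bigcup_seq_sub W _ _ Hm) v Hj).
  rewrite HvM.
  have : I \subset [set i; j].
    apply/subsetP => k; rewrite !inE => Hk.
    have [b1 b2] := adj v k i Hk Hi; have [c1 c2] := adj v k j Hk Hj.
    have : (k : nat) = i \/ (k : nat) = j by lia.
    by case=> E; apply/orP; [left|right]; apply/eqP; apply: val_inj.
  move/subset_leq_card; by rewrite cards2 Hij.
have -> : \sum_(i < t) #|pverts tl hd (nth [::] A i)| = \sum_v #|[set i : 'I_t | v \in W i]|.
  under eq_bigr do rewrite card_sum.
  rewrite exchange_big /=; apply: eq_bigr => v _.
  by rewrite card_sum; apply: eq_bigr => i _; rewrite inE.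
rewrite HM; apply: (@leq_trans (\sum_v (1 + ((v \in M) : nat)))); first by apply: leq_sum => v _; exact: Hv v.
by rewrite big_split /= sum1_card card_sum.
Qed.

End Q.

Theorem lemma3p7 (V Ar : finType) (tl hd : Ar -> V) (n d m : nat)
  (A : seq (seq Ar)) :
  in_Qndm tl hd n d m ->
  1 <= size A ->
  is_chain tl hd A ->
  in_Omega0 tl hd (chain_delta A) ->
  absdeg (chain_delta A) - m * size A - chain_n0 tl hd A <= n.
Proof.
move=> [Hn _ _ [_ Hm]] _ Hc _.
have Hcount := @chain_count V Ar tl hd A Hc.
have Hprim := Hc.1.
set S := \sum_(a <- A) size a.
have H1 : absdeg (chain_delta A) = 2 * S.
  rewrite /absdeg /S.
  under eq_bigr do rewrite ffunE.
  rewrite -big_distrr /= exchange_big /=; congr (2 * _).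
  by apply: eq_bigr => a _; rewrite -sum_count_size; apply: eq_bigr => b _; rewrite ffunE.
have HS : S = \sum_(i < size A) #|pverts tl hd (nth [::] A i)|.
  rewrite /S (big_nth [::]) big_mkord; apply: eq_bigr => i _.
  exact: prim_size (Hprim i (ltn_ord i)).
have H2 : S <= m * size A.
  rewrite /S (big_nth [::]) big_mkord.
  apply: leq_trans (_ : \sum_(i < size A) m <= _).
    by apply: leq_sum => i _; apply: Hm; apply: Hprim.
  by rewrite sum_nat_const card_ord mulnC.
rewrite H1; rewrite -HS Hn in Hcount; lia.
Qed.
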